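(* Let $f(w)=\frac12 w^TAw-b^Tw+c$ with $A\in\mathbb{R}^{n\times n}$ symmetric positive definite, $b\in\mathbb{R}^n$, $c\in\mathbb{R}$. Let $x^k\in\mathbb{R}^n$ with $\nabla f(x^k)\ne 0$, let $t_k=\frac{2\|\nabla f(x^k)\|^2}{\nabla f(x^k)^TA\nabla f(x^k)}$ and $y^k=x^k-t_k\nabla f(x^k)$, and assume $\nabla f(x^k)$ and $\nabla f(y^k)$ are linearly independent. Let $g_x=\nabla f(x^k)$, $g_y=\nabla f(y^k)$, and define $$\Delta_k=\langle g_y,Ag_y\rangle\langle g_x,Ag_x\rangle-\langle g_x,Ag_y\rangle^2,$$ $$\alpha_k=\frac{\langle g_y,g_x\rangle\langle g_x,Ag_y\rangle-\langle g_x,g_x\rangle\langle g_y,Ag_y\rangle}{\Delta_k},\qquad \beta_k=\frac{-\langle g_y,g_x\rangle\langle g_x,Ag_x\rangle+\langle g_x,g_x\rangle\langle g_y,Ag_x\rangle}{\Delta_k},$$ and $x^{k+1}=x^k+\alpha_kg_x+\beta_kg_y$. Let $\Pi_k=\{x^k+\alpha g_x+\beta g_y:\alpha,\beta\in\mathbb{R}\}$ and $L_k=\{x\in\mathbb{R}^n: f(x)=f(x^k)\}$, and $E_k=\Pi_k\cap L_k$. Then: $\Delta_k>0$; $E_k$ is an ellipse contained in the two-dimensional affine plane $\Pi_k$ which contains $x^k$ and $y^k$, with $E_k$ orthogonal to $g_x$ at $x^k$ (i.e., $g_x$ is orthogonal to the tangent line of $E_k$ at $x^k$) and orthogonal to $g_y$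 at $y^k$; and $x^{k+1}$ is both the unique minimizer of $f$ on $\Pi_k$ and the center of the ellipse $E_k$.
   Context: $\langle u,v\rangle=u^Tv$, $\|\cdot\|$ the Euclidean norm, $\nabla f(w)=Aw-b$. *)

(* Defs.v *)
From HB Require Import structures.
From mathcomp Require Import all_boot all_order all_algebra.
From mathcomp Require Import boolp classical_sets reals.
Set Implicit Arguments. Unset Strict Implicit. Unset Printing Implicit Defensive.
Import Order.TTheory GRing.Theory Num.Theory.
Local Open Scope ring_scope.
Local Open Scope classical_set_scope.

Definition dotv {R : realType} {n : nat} (u v : 'cV[R]_n) : R := (u^T *m v) 0 0.

Definition sym_posdef {R : realType} {n : nat} (A : 'M[R]_n) : Prop :=
  A^T = A /\ forall v : 'cV[R]_n, v != 0 -> 0 < dotv v (A *m v).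

Definition quadf {R : realType} {n : nat} (A : 'M[R]_n) (b : 'cV[R]_n) (c : R)
  (w : 'cV[R]_n) : R := 2^-1 * dotv w (A *m w) - dotv b w + c.

Definition gradq {R : realType} {n : nat} (A : 'M[R]_n) (b w : 'cV[R]_n)
  : 'cV[R]_n := A *m w - b.

Definition aplane {R : realType} {n : nat} (x u v : 'cV[R]_n) : set 'cV[R]_n :=
  [set z | exists a b : R, z = x + a *: u + b *: v].

(* The ellipse with center p and linearly independent conjugate semi-axes
   e1, e2: image of the unit circle under s,t |-> p + s e1 + t e2. *)
Definition ellipse {R : realType} {n : nat} (p e1 e2 : 'cV[R]_n) : set 'cV[R]_n :=
  [set z | exists s t : R, s ^+ 2 + t ^+ 2 = 1 /\ z = p + s *: e1 + t *: e2].

Definition ellipse_tangent {R : realType} {n : nat} (e1 e2 : 'cV[R]_n) (s t : R)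
  : 'cV[R]_n := (- t) *: e1 + s *: e2.

(* Main.v *)
Require Import Defs.
From HB Require Import structures.
From mathcomp Require Import all_boot all_order all_algebra.
From mathcomp Require Import boolp classical_sets reals.
From mathcomp Require Import ring lra.
Import Order.TTheory GRing.Theory Num.Theory.
Local Open Scope ring_scope.
Local Open Scope classical_set_scope.
Set Implicit Arguments. Unset Strict Implicit. Unset Printing Implicit Defensive.

Lemma dotvE (R : realType) (n : nat) (u v : 'cV[R]_n) :
  dotv u v = \sum_i u i 0 * v i 0.
Proof. by rewrite /dotv !mxE; apply: eq_bigr => i _; rewrite !mxE. Qed.

Lemma dotvDl (R : realType) (n : nat) (u v w : 'cV[R]_n) :
  dotv (u + v) w = dotv u w + dotv v w.
Proof. by rewrite !dotvE -big_split; apply: eq_bigr => i _; rewrite !mxE mulrDl. Qed.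

Lemma dotvC (R : realType) (n : nat) (u v : 'cV[R]_n) : dotv u v = dotv v u.
Proof. rewrite !dotvE; apply: eq_bigr => i _; ring. Qed.

Lemma dotvDr (R : realType) (n : nat) (u v w : 'cV[R]_n) :
  dotv w (u + v) = dotv w u + dotv w v.
Proof. by rewrite dotvC dotvDl !(dotvC w). Qed.

Lemma dotvZl (R : realType) (n : nat) (k : R) (u w : 'cV[R]_n) :
  dotv (k *: u) w = k * dotv u w.
Proof. rewrite !dotvE mulr_sumr; apply: eq_bigr => i _; rewrite !mxE; ring. Qed.

Lemma dotvZr (R : realType) (n : nat) (k : R) (u w : 'cV[R]_n) :
  dotv w (k *: u) = k * dotv w u.
Proof. by rewrite dotvC dotvZl dotvC. Qed.

Lemma dotvNl (R : realType) (n : nat) (u w : 'cV[R]_n) :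
  dotv (- u) w = - dotv u w.
Proof. by rewrite -scaleN1r dotvZl mulN1r. Qed.

Lemma dotvNr (R : realType) (n : nat) (u w : 'cV[R]_n) :
  dotv w (- u) = - dotv w u.
Proof. by rewrite dotvC dotvNl dotvC. Qed.

Lemma dotv0l (R : realType) (n : nat) (w : 'cV[R]_n) : dotv 0 w = 0.
Proof. by rewrite -(scale0r (0 : 'cV[R]_n)) dotvZl mul0r. Qed.

Lemma dotv0r (R : realType) (n : nat) (w : 'cV[R]_n) : dotv w 0 = 0.
Proof. by rewrite dotvC dotv0l. Qed.

Lemma dotv_self_gt0 (R : realType) (n : nat) (v : 'cV[R]_n) :
  v != 0 -> 0 < dotv v v.
Proof.
move=> v0; rewrite lt_def; apply/andP; split; last first.
  by rewrite dotvE sumr_ge0 // => i _; rewrite -expr2 sqr_ge0.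
apply/eqP => /eqP; rewrite dotvE psumr_eq0 => [/allP H|i _]; last by rewrite -expr2 sqr_ge0.
move/eqP: v0; apply; apply/matrixP => i j; rewrite ord1 mxE.
by move: (H i (mem_index_enum _)) => /= /eqP/eqP; rewrite mulf_eq0 orbb => /eqP.
Qed.

Lemma dotv_symA (R : realType) (n : nat) (A : 'M[R]_n) (u v : 'cV[R]_n) :
  A^T = A -> dotv u (A *m v) = dotv v (A *m u).
Proof.
move=> sA; rewrite [RHS]dotvC /dotv mulmxA.
by rewrite trmx_mul sA.
Qed.

Lemma free2P (R : realType) (n : nat) (u v : 'cV[R]_n) :
  free [:: u; v] -> forall s t : R, s *: u + t *: v = 0 -> s = 0 /\ t = 0.
Proof.
rewrite free_cons seq1_free span_seq1 => /andP[nu v0] s t H.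
have s0 : s = 0.
  case: (eqVneq s 0) => // s0; exfalso; move/negP: nu; apply; apply/vlineP.
  exists (- t / s); apply: (scalerI s0); rewrite scalerA mulrCA mulfV // mulr1.
  by rewrite scaleNr; apply/eqP; rewrite -addr_eq0 H.
split=> //; move: H; rewrite s0 scale0r add0r => /eqP.
by rewrite scaler_eq0 (negPf v0) orbF => /eqP.
Qed.

Lemma free2I (R : realType) (n : nat) (u v : 'cV[R]_n) :
  (forall s t : R, s *: u + t *: v = 0 -> s = 0 /\ t = 0) -> free [:: u; v].
Proof.
move=> H; rewrite free_cons seq1_free span_seq1; apply/andP; split.
  apply/negP => /vlineP[k ek]; have [] := H 1 (- k).
    by rewrite scale1r ek scaleNr subrr.
  by move/eqP; rewrite oner_eq0.
apply/eqP => v0; have [] := H 0 1; first by rewrite v0 scale0r scaler0 addr0.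
by move=> _ /eqP; rewrite oner_eq0.
Qed.

Lemma gradqD (R : realType) (n : nat) (A : 'M[R]_n) (b x v : 'cV[R]_n) :
  gradq A b (x + v) = gradq A b x + A *m v.
Proof. by rewrite /gradq mulmxDr addrAC. Qed.

Lemma quadf_expand (R : realType) (n : nat) (A : 'M[R]_n) (b : 'cV[R]_n) (c : R)
  (x v : 'cV[R]_n) : A^T = A ->
  quadf A b c (x + v) = quadf A b c x + dotv (gradq A b x) v + 2^-1 * dotv v (A *m v).
Proof.
move=> sA; rewrite /quadf /gradq mulmxDr !dotvDl !dotvDr ?dotvNl.
rewrite (dotv_symA x v sA) (dotvC (A *m x) v).
set X := dotv x (A *m x); set Y := dotv v (A *m x); set Z := dotv v (A *m v).

lra.
Qed.

Unset Implicit Arguments.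
Set Strict Implicit.

Theorem mainTheorem2 (R : realType) (n : nat) (A : 'M[R]_n) (b : 'cV[R]_n)
    (c : R) (xk : 'cV[R]_n) :
  sym_posdef A ->
  gradq A b xk != 0 ->
  let gx := gradq A b xk in
  let tk := 2 * dotv gx gx / dotv gx (A *m gx) in
  let yk := xk - tk *: gx in
  let gy := gradq A b yk in
  free [:: gx; gy] ->
  let Delta := dotv gy (A *m gy) * dotv gx (A *m gx) - (dotv gx (A *m gy)) ^+ 2 in
  let alpha := (dotv gy gx * dotv gx (A *m gy) - dotv gx gx * dotv gy (A *m gy))
               / Delta in
  let beta := (- (dotv gy gx * dotv gx (A *m gx)) + dotv gx gx * dotv gy (A *m gx))
              / Delta in
  let xk1 := xk + alpha *: gx + beta *: gy in
  let Pi := aplane xk gx gy in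
  let L := [set x | quadf A b c x = quadf A b c xk] in
  let E := Pi `&` L in
  [/\ 0 < Delta,
      (exists e1 e2 : 'cV[R]_n,
         [/\ free [:: e1; e2],
             E = ellipse xk1 e1 e2,
             [/\ Pi xk1, Pi (xk1 + e1), Pi (xk1 + e2), E xk & E yk],
             (forall s t : R, s ^+ 2 + t ^+ 2 = 1 -> xk = xk1 + s *: e1 + t *: e2 ->
                dotv gx (ellipse_tangent e1 e2 s t) = 0) &
             (forall s t : R, s ^+ 2 + t ^+ 2 = 1 -> yk = xk1 + s *: e1 + t *: e2 ->
                dotv gy (ellipse_tangent e1 e2 s t) = 0)]) &
      (Pi xk1 /\ forall z, Pi z -> z != xk1 -> quadf A b c xk1 < quadf A b c z)].
Proof.
move=> [sA posA] gnz gx tk yk gy fr Delta alpha beta xk1 Pi L E.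
have gxE : gx = gradq A b xk by [].
have tkE : tk = 2 * dotv gx gx / dotv gx (A *m gx) by [].
have ykE : yk = xk - tk *: gx by [].
have gyE : gy = gradq A b yk by [].
have DeltaE : Delta = dotv gy (A *m gy) * dotv gx (A *m gx) - (dotv gx (A *m gy)) ^+ 2 by [].
have alphaE : alpha = (dotv gy gx * dotv gx (A *m gy) - dotv gx gx * dotv gy (A *m gy))
               / Delta by [].
have betaE : beta = (- (dotv gy gx * dotv gx (A *m gx)) + dotv gx gx * dotv gy (A *m gx))
              / Delta by [].
have xk1E : xk1 = xk + alpha *: gx + beta *: gy by [].
clearbody gx tk yk gy Delta alpha beta xk1.
have hp : dotv gy (A *m gx) = dotv gx (A *m gy) by apply: dotv_symA.
rewrite hp in betaE.
set a := dotv gx (A *m gx) in tkE DeltaE betaE.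
set p := dotv gx (A *m gy) in DeltaE alphaE betaE hp.
set d := dotv gy (A *m gy) in DeltaE alphaE.
set G := dotv gx gx in tkE alphaE betaE.
set M := dotv gy gx in alphaE betaE.
have aE : a = dotv gx (A *m gx) by [].
have pE : p = dotv gx (A *m gy) by [].
have dE : d = dotv gy (A *m gy) by [].
have GE : G = dotv gx gx by [].
have ME : M = dotv gy gx by [].
clearbody a p d G M.
have fr2 := free2P fr.
have gnz' : gx != 0 by rewrite gxE.
have hnz : gy != 0.
  apply/eqP => h0; have [] := fr2 0 1; first by rewrite h0 scale0r scaler0 addr0.
  by move=> _ /eqP; rewrite oner_eq0.
have ha : 0 < a by rewrite aE; apply: posA.
have hd : 0 < d by rewrite dE; apply: posA.
have hG : 0 < G by rewrite GE; apply: dotv_self_gt0.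
have bform : forall x1 y1 x2 y2, dotv (x1*:gx + y1*:gy) (A *m (x2*:gx + y2*:gy))
    = x1*x2*a + (x1*y2 + y1*x2)* p + y1*y2*d.
  move=> x1 y1 x2 y2; rewrite mulmxDr -!scalemxAr !dotvDl !dotvDr !dotvZl !dotvZr.
  rewrite -aE -dE -pE hp; ring.
pose Q x y := x^+2 * a + 2 * x * y * p + y^+2 * d.
have Qdot : forall x y, Q x y = dotv (x*:gx + y*:gy) (A *m (x*:gx + y*:gy)).
  by move=> x y; rewrite bform /Q; ring.
have vnz : forall x y, (x != 0) || (y != 0) -> x*:gx + y*:gy != 0.
  move=> x y /orP H; apply/eqP => /fr2 [x0 y0]; by case: H => /eqP.
have Qpos : forall x y, (x != 0) || (y != 0) -> 0 < Q x y.
  by move=> x y /vnz H; rewrite Qdot; apply: posA.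
have hD : 0 < Delta.
  have := Qpos p (- a); rewrite oppr_eq0 (gt_eqF ha) orbT => /(_ isT).
  rewrite DeltaE /Q => H; nra.
have Dnz : Delta != 0 by rewrite gt_eqF.
have anz : a != 0 by rewrite gt_eqF.
have E1 : G = - (alpha * a + beta * p).
  by rewrite alphaE betaE DeltaE; field; rewrite -DeltaE.
have E2 : M = - (alpha * p + beta * d).
  by rewrite alphaE betaE DeltaE; field; rewrite -DeltaE.
have orth : forall x y, dotv (gradq A b xk1) (x*:gx + y*:gy) = 0.
  move=> x y; rewrite xk1E -addrA gradqD -gxE dotvDl (dotvC (A *m _)) bform.
  rewrite !dotvDr !dotvZr -GE (dotvC gx gy) -ME E1 E2; ring.
have fP : forall x y, quadf A b c (xk1 + x*:gx + y*:gy) = quadf A b c xk1 + 2^-1 * Q x y.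
  by move=> x y; rewrite -addrA quadf_expand // orth Qdot addr0.
have gP : forall x y z, dotv (gradq A b (xk1 + x*:gx + y*:gy)) z = dotv z (A *m (x*:gx + y*:gy))
    + dotv (gradq A b xk1) z.
  by move=> x y z; rewrite -addrA gradqD dotvDl [RHS]addrC (dotvC z).
have Pin : forall x y, Pi (xk1 + x*:gx + y*:gy).
  move=> x y; exists (alpha + x), (beta + y); rewrite xk1E.
  by apply/matrixP => i j; rewrite !mxE; ring.
have Pinj : forall x y x' y', xk1 + x*:gx + y*:gy = xk1 + x'*:gx + y'*:gy -> x = x' /\ y = y'.
  move=> x y x' y' H.
  have : (x - x') *: gx + (y - y') *: gy = 0.
    have -> : (x - x') *: gx + (y - y') *: gy
      = (xk1 + x*:gx + y*:gy) - (xk1 + x'*:gx + y'*:gy).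
      by apply/matrixP => i j; rewrite !mxE; ring.
    by rewrite H subrr.
  by move/fr2 => [/eqP + /eqP]; rewrite !subr_eq0 => /eqP -> /eqP ->.
have Exk : xk = xk1 + (- alpha) *: gx + (- beta) *: gy.
  by rewrite xk1E; apply/matrixP => i j; rewrite !mxE; ring.
pose r2 := Q (- alpha) (- beta).
have hr2 : 0 < r2.
  apply: Qpos; rewrite !oppr_eq0; case: (eqVneq alpha 0) => [a0|] //=; case: (eqVneq beta 0) => [b0|] //=.
  by move: hG; rewrite E1 a0 b0 !mul0r addr0 oppr0 ltxx.
have fxk : quadf A b c xk = quadf A b c xk1 + 2^-1 * r2 by rewrite {1}Exk fP.
have fyk : quadf A b c yk = quadf A b c xk.
  rewrite ykE -scaleNr quadf_expand // -gxE dotvZr dotvZl -scalemxAr.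
  rewrite dotvZr -GE -aE tkE; field; exact: anz.
pose k1 := Num.sqrt (r2 / a).
pose k2 := Num.sqrt (r2 / (a * Delta)).
have k1sq : k1 ^+ 2 = r2 / a by rewrite sqr_sqrtr // ltW // divr_gt0.
have k2sq : k2 ^+ 2 = r2 / (a * Delta) by rewrite sqr_sqrtr // ltW // divr_gt0 // mulr_gt0.
have k1nz : k1 != 0 by rewrite gt_eqF // sqrtr_gt0 divr_gt0.
have k2nz : k2 != 0 by rewrite gt_eqF // sqrtr_gt0 divr_gt0 // mulr_gt0.
pose e1 := k1 *: gx.
pose e2 := k2 *: (a *: gy - p *: gx).
have comb : forall s t, xk1 + s*:e1 + t*:e2 = xk1 + (s*k1 - t*k2* p)*:gx + (t*k2*a)*:gy.
  by move=> s t; apply/matrixP => i j; rewrite !mxE; ring.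
have Qid : forall s t, Q (s*k1 - t*k2* p) (t*k2*a) = (s^+2 + t^+2) * r2.
  move=> s t; transitivity (s^+2 * (k1^+2 * a) + t^+2 * (k2^+2 * (a * Delta))).
    by rewrite /Q DeltaE; ring.
  by rewrite k1sq k2sq; field; rewrite anz Dnz.
have tang : forall s t z, z = xk1 + s*:e1 + t*:e2 ->
    dotv (gradq A b z) (ellipse_tangent e1 e2 s t) = 0.
  move=> s t z ->; rewrite comb gP.
  have -> : ellipse_tangent e1 e2 s t = (- t * k1 - s * k2 * p) *: gx + (s * k2 * a) *: gy.
    by rewrite /ellipse_tangent; apply/matrixP => i j; rewrite !mxE; ring.
  rewrite orth addr0 bform.
  transitivity (s * t * (k2^+2 * (a * Delta) - k1^+2 * a)).
    by rewrite DeltaE; ring.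
  by rewrite k1sq k2sq; field; rewrite anz Dnz.
split => //.
- exists e1, e2; split.
  + apply: free2I => s t H.
    have H' : (s*k1 - t*k2* p) *: gx + (t*k2*a) *: gy = 0.
      by rewrite -H; apply/matrixP => i j; rewrite !mxE; ring.
    move/fr2: H' => [H1 /eqP H2].
    move: H2; rewrite !mulf_eq0 (negPf k2nz) (negPf anz) !orbF => /eqP t0.
    move: H1; rewrite t0 !mul0r subr0 => /eqP; rewrite mulf_eq0 (negPf k1nz) orbF => /eqP.
    by [].
  + rewrite /E /ellipse; apply/seteqP; split => z /=.
    * case=> [[s [t ->]] Lz].
      have zE : xk + s *: gx + t *: gy = xk1 + (s - alpha) *: gx + (t - beta) *: gy.
        by rewrite xk1E; apply/matrixP => i j; rewrite !mxE; ring.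
      move: Lz; rewrite /L /= zE fP fxk => Lz.
      set x := s - alpha in zE Lz *; set y := t - beta in zE Lz *.
      have Qxy : Q x y = r2 by lra.
      pose s' := (x + y * p / a) / k1; pose t' := y / (a * k2).
      have sx : s' * k1 - t' * k2 * p = x by rewrite /s' /t'; field; rewrite k1nz anz k2nz.
      have ty : t' * k2 * a = y by rewrite /t'; field; rewrite anz k2nz.
      exists s', t'; split; last by rewrite comb sx ty.
      have : r2 = (s'^+2 + t'^+2) * r2 by rewrite -Qid sx ty.
      move/eqP; rewrite -subr_eq0 -{1}(mul1r r2) -mulrBl mulf_eq0 (gt_eqF hr2) orbF.
      by rewrite subr_eq0 => /eqP ->.
    * case=> s [t [st1 ->]]; split; first by rewrite comb; apply: Pin.
      by rewrite /L /= comb fP Qid st1 mul1r fxk.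
  + split.
    * by exists alpha, beta.
    * have -> : xk1 + e1 = xk1 + k1 *: gx + 0 *: gy.
        by apply/matrixP => i j; rewrite !mxE; ring.
      exact: Pin.
    * have -> : xk1 + e2 = xk1 + (- (k2 * p)) *: gx + (k2 * a) *: gy.
        by apply/matrixP => i j; rewrite !mxE; ring.
      exact: Pin.
    * split => //; exists 0, 0; by apply/matrixP => i j; rewrite !mxE; ring.
    * split; last exact: fyk.
      exists (- tk), 0; rewrite ykE; by apply/matrixP => i j; rewrite !mxE; ring.
  + by move=> s t _ H; rewrite gxE; apply: tang.
  + by move=> s t _ H; rewrite gyE; apply: tang.
- split; first by exists alpha, beta.
  move=> z [s [t ->]] zne.
  have zE : xk + s *: gx + t *: gy = xk1 + (s - alpha) *: gx + (t - beta) *: gy.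
    by rewrite xk1E; apply/matrixP => i j; rewrite !mxE; ring.
  rewrite zE fP.
  have : 0 < Q (s - alpha) (t - beta).
    apply: Qpos; case: (eqVneq (s - alpha) 0) => [x0|] //=; case: (eqVneq (t - beta) 0) => [y0|] //=.
    by exfalso; move/eqP: zne; apply; rewrite zE x0 y0 !scale0r !addr0.
  lra.
Qed.
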